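(* Let $\gamma$ and $c$ be real constants and let $u(\xi)$, $v(\xi)$ be smooth functions of $\xi\in\mathbb{R}$ satisfying the travelling-wave system \[ -c u' + 3 u u' = - v\,\big(\gamma v'' + 3v^2\big)', \qquad -c v' + (uv)' = -\big(\gamma v'' + 3 v^2\big)', \] with boundary conditions $\lim_{\xi\to\pm\infty} u(\xi) = u_0$ and $\lim_{\xi\to\pm\infty} v(\xi) = 0$. Then for all $\xi$, \[ (u-c)^2\left(u - \tfrac12 v^2\right) = (u_0 - c)^2 u_0 . \]
   Context: This system is obtained from the Burgers–swept KdV system $u_t + 3uu_x = -v\partial_x(3v^2+\gamma v_{xx})$, $v_t + 6vv_x + \gamma v_{xxx} = -\partial_x(uv)$ by the travelling-wave ansatz $u(x,t)=u(\xi)$, $v(x,t)=v(\xi)$ with $\xi = x-ct$; primes denote $d/d\xi$. *)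

(* Defs.v *)
From Stdlib Require Import Reals.
From Coquelicot Require Import Coquelicot.
Open Scope R_scope.

Definition smooth (f : R -> R) : Prop := forall (n : nat) (x : R), ex_derive_n f n x.

(* Main.v *)
Require Import Defs.
From Stdlib Require Import Reals Lra.
From Coquelicot Require Import Coquelicot.
Open Scope R_scope.

Theorem lemma2p1 (gamma c u0 : R) (u v : R -> R) :
  smooth u -> smooth v ->
  (forall xi : R,
     - c * Derive u xi + 3 * u xi * Derive u xi
     = - v xi * Derive (fun y => gamma * Derive_n v 2 y + 3 * v y ^ 2) xi) ->
  (forall xi : R,
     - c * Derive v xi + Derive (fun y => u y * v y) xi
     = - Derive (fun y => gamma * Derive_n v 2 y + 3 * v y ^ 2) xi) ->
  is_lim u p_infty u0 -> is_lim u m_infty u0 ->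
  is_lim v p_infty 0 -> is_lim v m_infty 0 ->
  forall xi : R,
    (u xi - c) ^ 2 * (u xi - / 2 * v xi ^ 2) = (u0 - c) ^ 2 * u0.
Proof.
  intros su sv E1 E2 lu _ lv _ xi.
  assert (du : forall x, ex_derive u x) by (intro x; exact (su 1%nat x)).
  assert (dv : forall x, ex_derive v x) by (intro x; exact (sv 1%nat x)).
  set (F := fun y => (u y - c) * (u y - c) * (u y - / 2 * (v y * v y))).
  assert (DF : forall t, is_derive F t zero).
  { intro t. unfold F.
    assert (H := E1 t). assert (H2 := E2 t). rewrite Derive_mult in H2 by auto.
    assert (Hd : Derive (fun y => gamma * Derive_n v 2 y + 3 * v y ^ 2) t
       = c * Derive v t - (Derive u t * v t + u t * Derive v t)) by lra.
    rewrite Hd in H. clear Hd H2.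
    auto_derive.
    - repeat split; auto.
    - unfold zero; simpl.
      change (Derive (fun x => u x) t) with (Derive u t).
      change (Derive (fun x => v x) t) with (Derive v t).
      assert (H' := f_equal (fun z => (u t - c) * z) H). simpl in H'. lra. }
  assert (Fc : forall a b, F a = F b).
  { intros a b. destruct (Rtotal_order a b) as [h|[h|h]].
    - apply (eq_is_derive F a b); auto.
    - subst; reflexivity.
    - symmetry; apply (eq_is_derive F b a); auto. }
  assert (L1 : is_lim F p_infty (F xi)).
  { apply is_lim_ext with (fun _ => F xi). intro; apply Fc. apply is_lim_const. }
  assert (L2 : is_lim F p_infty ((u0 - c) * (u0 - c) * (u0 - / 2 * (0 * 0)))).
  { unfold F.
    apply (is_lim_mult _ _ _ (Finite ((u0 - c) * (u0 - c))) (Finite (u0 - / 2 * (0*0)))); [| |exact I].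
    - apply (is_lim_mult _ _ _ (Finite (u0 - c)) (Finite (u0 - c))); [| |exact I];
      apply (is_lim_minus _ _ _ u0 c); auto using is_lim_const; reflexivity.
    - apply (is_lim_minus _ _ _ u0 (/2 * (0*0))); [auto| |reflexivity].
      apply (is_lim_mult _ _ _ (Finite (/2)) (Finite (0*0))); [apply is_lim_const| |exact I].
      apply (is_lim_mult _ _ _ (Finite 0) (Finite 0)); auto; exact I. }
  apply is_lim_unique in L1. apply is_lim_unique in L2.
  rewrite L1 in L2. injection L2 as L2. unfold F in L2.
  replace ((u xi - c) ^ 2 * (u xi - / 2 * v xi ^ 2)) with ((u xi - c) * (u xi - c) * (u xi - / 2 * (v xi * v xi))) by ring.
  rewrite L2. ring.
Qed.
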